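(* Let $(\mathcal V,[\cdot,\cdots,\cdot],S)$ be a generalized metric $n$-Leibniz algebra. Define the bilinear form $B$ on $\otimes^{n-1}\mathcal V$ by (bilinear extension of) $$B(u_1\otimes\cdots\otimes u_{n-1},v_1\otimes\cdots\otimes v_{n-1})=S([u_1,\dots,u_{n-1},v_1],v_2,\dots,v_{n-1}).$$ Then $B$ is symmetric and associative-invariant with respect to the bracket $[\cdot,\cdot]_{\mathsf F}$, i.e. $B(U,[V,W]_{\mathsf F})=B([U,V]_{\mathsf F},W)$ for all $U,V,W\in\otimes^{n-1}\mathcal V$.
   Context: All vector spaces are finite-dimensional over $\mathbb R$. An $n$-Leibniz algebra is a vector space $\mathcal V$ with an $n$-linear map $[\cdot,\cdots,\cdot]$ satisfying $[u_1,\dots,u_{n-1},[v_1,\dots,v_n]]=\sum_{i=1}^n[v_1,\dots,[u_1,\dots,u_{n-1},v_i],\dots,v_n]$. A symmetric $S\in\mathrm{Sym}^{n-1}(\mathcal V^* )$ is non-degenerate if $S(u,v_1,\dots,v_{n-2})=0$ for all $v_j$ implies $u=0$. A generalized metric $n$-Leibniz algebra is an $n$-Leibniz algebra with a symmetric non-degenerate $S\in\mathrm{Sym}^{n-1}(\mathcal V^* )$ satisfying (a) unitarity: $\sum_{i=1}^{n-1}S(v_1,\dots,[u_1,\dots,u_{n-1},v_i],\dots,v_{n-1})=0$ and (b) symmetry: $S([u_1,\dots,u_{n-1},v_1],v_2,\dots,v_{n-1})=S([v_1,\dots,v_{n-1},u_1],u_2,\dots,u_{n-1})$. The bracket on $\otimes^{n-1}\mathcal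 V$ is defined on decomposables $U=u_1\otimes\cdots\otimes u_{n-1}$, $V=v_1\otimes\cdots\otimes v_{n-1}$ by $[U,V]_{\mathsf F}=\sum_{i=1}^{n-1}v_1\otimes\cdots\otimes v_{i-1}\otimes[u_1,\dots,u_{n-1},v_i]\otimes v_{i+1}\otimes\cdots\otimes v_{n-1}$ and extended bilinearly; $(\otimes^{n-1}\mathcal V,[\cdot,\cdot]_{\mathsf F})$ is a Leibniz algebra. *)

(* Defs.v *)
From HB Require Import structures.
From mathcomp Require Import all_boot all_order all_algebra all_fingroup.
Set Implicit Arguments. Unset Strict Implicit. Unset Printing Implicit Defensive.
Import Order.TTheory GRing.Theory Num.Theory.
Local Open Scope ring_scope.

(* Conventions: n = k.+2 (so n >= 2), hence n-1 = k.+1 and n-2 = k.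
   The vector space V is R^d, realised as row vectors 'rV[R]_d.
   The n-ary bracket [u_1,...,u_{n-1},v] is written  br us v  with us : 'I_(k.+1) -> V. *)

Definition upd (T : Type) (m : nat) (f : 'I_m -> T) (i : 'I_m) (x : T) : 'I_m -> T :=
  fun j => if j == i then x else f j.

Definition multilinear (R : pzRingType) (V W : lmodType R) (m : nat)
    (f : ('I_m -> V) -> W) : Prop :=
  forall (vs : 'I_m -> V) (i : 'I_m) (a : R) (x y : V),
    f (upd vs i (a *: x + y)) = a *: f (upd vs i x) + f (upd vs i y).

Definition linear_map (R : pzRingType) (V W : lmodType R) (f : V -> W) : Prop :=
  forall (a : R) (x y : V), f (a *: x + y) = a *: f x + f y.

Definition nlinear_bracket (R : realFieldType) (d k : nat)
    (br : ('I_k.+1 -> 'rV[R]_d) -> 'rV[R]_d -> 'rV[R]_d) : Prop :=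
  (forall v, multilinear (fun us => br us v)) /\ (forall us, linear_map (br us)).

Definition leibniz_identity (R : realFieldType) (d k : nat)
    (br : ('I_k.+1 -> 'rV[R]_d) -> 'rV[R]_d -> 'rV[R]_d) : Prop :=
  forall (us vs : 'I_k.+1 -> 'rV[R]_d) (w : 'rV[R]_d),
    br us (br vs w) =
      \sum_(i < k.+1) br (upd vs i (br us (vs i))) w + br vs (br us w).

Definition nLeibniz_algebra (R : realFieldType) (d k : nat)
    (br : ('I_k.+1 -> 'rV[R]_d) -> 'rV[R]_d -> 'rV[R]_d) : Prop :=
  nlinear_bracket br /\ leibniz_identity br.

Definition sym_form (R : realFieldType) (d k : nat)
    (S : ('I_k.+1 -> 'rV[R]_d) -> R) : Prop :=
  multilinear (W := R^o) S /\
  forall (vs : 'I_k.+1 -> 'rV[R]_d) (s : 'S_k.+1), S (vs \o s) = S vs.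

Definition nondegenerate (R : realFieldType) (d k : nat)
    (S : ('I_k.+1 -> 'rV[R]_d) -> R) : Prop :=
  forall u : 'rV[R]_d,
    (forall vs : 'I_k.+1 -> 'rV[R]_d, S (upd vs ord0 u) = 0) -> u = 0.

Definition unitarity (R : realFieldType) (d k : nat)
    (br : ('I_k.+1 -> 'rV[R]_d) -> 'rV[R]_d -> 'rV[R]_d)
    (S : ('I_k.+1 -> 'rV[R]_d) -> R) : Prop :=
  forall us vs : 'I_k.+1 -> 'rV[R]_d,
    \sum_(i < k.+1) S (upd vs i (br us (vs i))) = 0.

Definition symmetry_cond (R : realFieldType) (d k : nat)
    (br : ('I_k.+1 -> 'rV[R]_d) -> 'rV[R]_d -> 'rV[R]_d)
    (S : ('I_k.+1 -> 'rV[R]_d) -> R) : Prop :=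
  forall us vs : 'I_k.+1 -> 'rV[R]_d,
    S (upd vs ord0 (br us (vs ord0))) = S (upd us ord0 (br vs (us ord0))).

Definition gen_metric_nLeibniz (R : realFieldType) (d k : nat)
    (br : ('I_k.+1 -> 'rV[R]_d) -> 'rV[R]_d -> 'rV[R]_d)
    (S : ('I_k.+1 -> 'rV[R]_d) -> R) : Prop :=
  [/\ nLeibniz_algebra br, sym_form S, nondegenerate S,
      unitarity br S & symmetry_cond br S].

(* The tensor power (x)^{k.+1} R^d, in coordinates w.r.t. the basis
   e_{J 0} (x) ... (x) e_{J k}, J : {ffun 'I_(k.+1) -> 'I_d}. *)
Notation tensor R d k := {ffun {ffun 'I_k.+1 -> 'I_d} -> R^o}.

Definition tens (R : realFieldType) (d k : nat) (vs : 'I_k.+1 -> 'rV[R]_d)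
  : tensor R d k :=
  [ffun J : {ffun 'I_k.+1 -> 'I_d} => \prod_(i < k.+1) vs i ord0 (J i)].

Definition evec (R : realFieldType) (d : nat) (j : 'I_d) : 'rV[R]_d :=
  delta_mx ord0 j.
Definition bvecs (R : realFieldType) (d k : nat) (J : {ffun 'I_k.+1 -> 'I_d})
  : 'I_k.+1 -> 'rV[R]_d := fun i => evec R (J i).

Definition bracketF_dec (R : realFieldType) (d k : nat)
    (br : ('I_k.+1 -> 'rV[R]_d) -> 'rV[R]_d -> 'rV[R]_d)
    (us vs : 'I_k.+1 -> 'rV[R]_d) : tensor R d k :=
  \sum_(i < k.+1) tens (upd vs i (br us (vs i))).

Definition bracketF (R : realFieldType) (d k : nat)
    (br : ('I_k.+1 -> 'rV[R]_d) -> 'rV[R]_d -> 'rV[R]_d)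
    (U W : tensor R d k) : tensor R d k :=
  \sum_(I : {ffun 'I_k.+1 -> 'I_d}) \sum_(J : {ffun 'I_k.+1 -> 'I_d})
     (U I * W J) *: bracketF_dec br (bvecs R I) (bvecs R J).

Definition B_dec (R : realFieldType) (d k : nat)
    (br : ('I_k.+1 -> 'rV[R]_d) -> 'rV[R]_d -> 'rV[R]_d)
    (S : ('I_k.+1 -> 'rV[R]_d) -> R)
    (us vs : 'I_k.+1 -> 'rV[R]_d) : R :=
  S (upd vs ord0 (br us (vs ord0))).

Definition Bform (R : realFieldType) (d k : nat)
    (br : ('I_k.+1 -> 'rV[R]_d) -> 'rV[R]_d -> 'rV[R]_d)
    (S : ('I_k.+1 -> 'rV[R]_d) -> R)
    (U W : tensor R d k) : R :=
  \sum_(I : {ffun 'I_k.+1 -> 'I_d}) \sum_(J : {ffun 'I_k.+1 -> 'I_d})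
     U I * W J * B_dec br S (bvecs R I) (bvecs R J).

(* Main.v *)
Require Import Defs.
From HB Require Import structures.
From mathcomp Require Import all_boot all_order all_algebra all_fingroup.
From Stdlib Require Import FunctionalExtensionality.
From mathcomp Require Import ring.
Import Order.TTheory GRing.Theory Num.Theory.
Local Open Scope ring_scope.

Section S.
Variables (R : realFieldType) (d k : nat).
Implicit Types (vs : 'I_k.+1 -> 'rV[R]_d).

Definition ml (f : ('I_k.+1 -> 'rV[R]_d) -> R) :=
  forall vs i (a : R) x y, f (upd vs i (a *: x + y)) = a * f (upd vs i x) + f (upd vs i y).

Lemma ml_of f : multilinear (W := R^o) f -> ml f.
Proof. by move=> H. Qed.

Lemma scaleZ (T : finType) (a : R) (F : {ffun T -> R^o}) x : (a *: F) x = a * F x.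
Proof. by rewrite ffunE. Qed.

Lemma upd_id vs i : upd vs i (vs i) = vs.
Proof. by apply: functional_extensionality => j; rewrite /upd; case: eqP => // ->. Qed.

Lemma upd_upd vs i x y : upd (upd vs i x) i y = upd vs i y.
Proof. by apply: functional_extensionality => j; rewrite /upd; case: eqP. Qed.

Lemma upd_eq vs i x : upd vs i x i = x.
Proof. by rewrite /upd eqxx. Qed.

Lemma upd_neq vs i j x : j != i -> upd vs i x j = vs j.
Proof. by rewrite /upd => /negbTE ->. Qed.

Lemma upd_C vs i j x y : i != j -> upd (upd vs i x) j y = upd (upd vs j y) i x.
Proof.
move=> ij; apply: functional_extensionality => l; rewrite /upd.
case: (eqVneq l j) => [e|]; case: (eqVneq l i) => // e2; by move: ij; rewrite -e -e2 eqxx.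
Qed.

Lemma ml0 f vs i : ml f -> f (upd vs i 0) = 0.
Proof.
move=> H; have := H vs i 1 0 0; rewrite scale1r addr0 mul1r.
by move/(congr1 (fun t => t - f (upd vs i 0))); rewrite subrr addrK.
Qed.

Lemma ml_sum f vs i (I : Type) (r : seq I) (c : I -> R) (x : I -> 'rV[R]_d) : ml f ->
  f (upd vs i (\sum_(j <- r) c j *: x j)) = \sum_(j <- r) c j * f (upd vs i (x j)).
Proof.
move=> H; elim: r => [|j r IH]; first by rewrite !big_nil ml0.
by rewrite !big_cons H IH.
Qed.

Lemma ml_zero h : ml h -> (forall J : {ffun 'I_k.+1 -> 'I_d}, h (bvecs R J) = 0) ->
  forall vs, h vs = 0.
Proof.
move=> H H0.
have C : forall p vs, (forall i : 'I_k.+1, (p <= i)%N -> exists j, vs i == evec R j) -> h vs = 0.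
  elim=> [|p IH] vs Hv.
    pose J := [ffun i => xchoose (Hv i (leq0n i))].
    have -> : vs = bvecs R J.
      apply: functional_extensionality => i; rewrite /bvecs ffunE.
      exact/eqP/(xchooseP (Hv i (leq0n i))).
    exact: H0.
  case: (ltnP p k.+1) => hp; last first.
    apply: IH => i hi; exfalso; move: (ltn_ord i); rewrite ltnNge.
    by rewrite (leq_trans hp hi).
  pose i0 := Ordinal hp.
  rewrite -(upd_id vs i0) [vs i0]row_sum_delta ml_sum //.
  apply: big1 => j _; rewrite IH ?mulr0 // => i hi.
  case: (eqVneq i i0) => [->|ne]; first by exists j; rewrite upd_eq.
  rewrite upd_neq //; apply: Hv.
  by rewrite ltn_neqAle hi andbT; apply: contra ne => /eqP e; apply/eqP/val_inj.
move=> vs; apply: (C k.+1) => i hi; exfalso; move: (ltn_ord i); by rewrite ltnNge hi.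
Qed.


Lemma tens_basis (J L : {ffun 'I_k.+1 -> 'I_d}) : tens (bvecs R J) L = (J == L)%:R.
Proof.
rewrite ffunE; case: (eqVneq J L) => [<-|ne].
  by apply: big1 => i _; rewrite /bvecs /evec mxE !eqxx.
have [i hi] : exists i, J i != L i.
  apply/existsP; apply: contraR ne; rewrite negb_exists => /forallP hh.
  by apply/eqP/ffunP => i; apply/eqP; move: (hh i); rewrite negbK.
by rewrite (bigD1 i) //= /bvecs /evec mxE eqxx /= eq_sym (negbTE hi) mul0r.
Qed.

Lemma tens_upd vs i z (L : {ffun 'I_k.+1 -> 'I_d}) :
  tens (upd vs i z) L = z 0 (L i) * \prod_(l | l != i) vs l 0 (L l).
Proof.
rewrite ffunE (bigD1 i) //= upd_eq; congr (_ * _).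
by apply: eq_bigr => l hl; rewrite upd_neq.
Qed.

Lemma expand f : ml f -> forall vs,
  \sum_(L : {ffun 'I_k.+1 -> 'I_d}) tens vs L * f (bvecs R L) = f vs.
Proof.
move=> H vs; apply/eqP; rewrite eq_sym -subr_eq0; apply/eqP; move: vs.
apply: (@ml_zero (fun vs => f vs - \sum_(L : {ffun 'I_k.+1 -> 'I_d}) tens vs L * f (bvecs R L))).
  move=> vs i a x y /=; rewrite H.
  have -> : \sum_L tens (upd vs i (a *: x + y)) L * f (bvecs R L) =
     a * (\sum_L tens (upd vs i x) L * f (bvecs R L)) + \sum_L tens (upd vs i y) L * f (bvecs R L).
    rewrite mulr_sumr -big_split /=; apply: eq_bigr => L _.
    rewrite !tens_upd !mxE; ring.
  ring.
move=> J; rewrite (bigD1 J) //= tens_basis eqxx mul1r big1 ?addr0 ?subrr // => L hL.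
by rewrite tens_basis eq_sym (negbTE hL) mul0r.
Qed.


Lemma ml_sum1 f vs i (I : Type) (r : seq I) (x : I -> 'rV[R]_d) : ml f ->
  f (upd vs i (\sum_(j <- r) x j)) = \sum_(j <- r) f (upd vs i (x j)).
Proof.
move=> H; have := @ml_sum f vs i _ r (fun=> 1) x H.
under eq_bigr do rewrite scale1r. under [in RHS]eq_bigr do rewrite mul1r. done.
Qed.

Lemma phi_sum (T : finType) (I : Type) (r : seq I) (F : I -> {ffun T -> R^o}) (g : T -> R) :
  \sum_L (\sum_(j <- r) F j) L * g L = \sum_(j <- r) \sum_L F j L * g L.
Proof.
under eq_bigr do rewrite sum_ffunE mulr_suml.
by rewrite exchange_big.
Qed.

Lemma phi_scale (T : finType) (c : R) (X : {ffun T -> R^o}) (g : T -> R) :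
  \sum_L (c *: X) L * g L = c * \sum_L X L * g L.
Proof. rewrite mulr_sumr; apply: eq_bigr => L _; by rewrite scaleZ mulrA. Qed.

Variables (br : ('I_k.+1 -> 'rV[R]_d) -> 'rV[R]_d -> 'rV[R]_d)
    (S : ('I_k.+1 -> 'rV[R]_d) -> R).
Hypothesis hG : gen_metric_nLeibniz br S.

Lemma SML : ml S. Proof. by case: hG => _ [] /ml_of. Qed.
Lemma BRL us : linear_map (br us). Proof. by case: hG => [[[_ ]]]. Qed.

Lemma Bdec_ml us : ml (B_dec br S us).
Proof.
move=> vs i a x y; rewrite /B_dec.
case: (eqVneq i ord0) => [->|ne].
  by rewrite !upd_eq !upd_upd BRL SML.
have ne' : ord0 != i by rewrite eq_sym.
by rewrite !(upd_neq _ _ _ _ ne') !(upd_C _ _ _ _ _ ne) SML.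
Qed.

Lemma Bsym us vs : B_dec br S us vs = B_dec br S vs us.
Proof. by case: hG => _ _ _ _; apply. Qed.

Lemma key us vs ws :
  \sum_i B_dec br S us (upd ws i (br vs (ws i))) =
  \sum_i B_dec br S (upd vs i (br us (vs i))) ws.
Proof.
have hU := (match hG with And5 _ _ _ u _ => u end) vs (upd ws ord0 (br us (ws ord0))).
have hL := (match hG with And5 (conj _ l) _ _ _ _ => l end) us vs (ws ord0).
rewrite /B_dec -(@ml_sum1 S _ _ _ _ _ SML).
have -> : \sum_i br (upd vs i (br us (vs i))) (ws ord0) =
   (-1) *: br vs (br us (ws ord0)) + br us (br vs (ws ord0)).
  by rewrite hL scaleN1r addrC addrK.
rewrite SML mulN1r.
rewrite big_ord_recl in hU; rewrite big_ord_recl upd_upd upd_eq.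
move: hU; rewrite upd_upd upd_eq => /eqP; rewrite addrC addr_eq0 => /eqP hU.
rewrite addrC; congr (_ + _); rewrite -hU; apply: eq_bigr => j _.
rewrite !(upd_neq _ _ _ _ (neq_lift _ _)) (upd_C _ _ _ _ _ (negbT _)) //.
Qed.

Lemma coordF vs ws us :
  \sum_L (bracketF_dec br vs ws) L * B_dec br S us (bvecs R L) =
  \sum_i B_dec br S us (upd ws i (br vs (ws i))).
Proof.
rewrite /bracketF_dec phi_sum; apply: eq_bigr => i _; exact: expand (Bdec_ml us) _.
Qed.

Lemma BformE U X : Bform br S U X =
  \sum_I U I * \sum_L X L * B_dec br S (bvecs R I) (bvecs R L).
Proof.
rewrite /Bform; apply: eq_bigr => I _; rewrite mulr_sumr; apply: eq_bigr => L _.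
by rewrite mulrA.
Qed.

Lemma Bform_sym U W : Bform br S U W = Bform br S W U.
Proof.
rewrite /Bform exchange_big; apply: eq_bigr => I _; apply: eq_bigr => J _.
rewrite [in LHS]Bsym; ring.
Qed.

Lemma inner_br V W (g : {ffun 'I_k.+1 -> 'I_d} -> R) :
  \sum_L (bracketF br V W) L * g L =
  \sum_J \sum_K (V J * W K) * \sum_L (bracketF_dec br (bvecs R J) (bvecs R K)) L * g L.
Proof.
rewrite /bracketF phi_sum; apply: eq_bigr => J _; rewrite phi_sum.
by apply: eq_bigr => K _; rewrite phi_scale.
Qed.

Lemma invariance U V W :
  Bform br S U (bracketF br V W) = Bform br S (bracketF br U V) W.
Proof.
rewrite [RHS]Bform_sym !BformE.
under eq_bigr do rewrite inner_br.
under [RHS]eq_bigr do rewrite inner_br.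
under eq_bigr => K _ do under eq_bigr => I _ do under eq_bigr => J _ do rewrite coordF.
under [RHS]eq_bigr => I _ do under eq_bigr => J _ do under eq_bigr => K _ do rewrite coordF.
pose D a b c := \sum_i B_dec br S (bvecs R c) (upd (bvecs R b) i (br (bvecs R a) (bvecs R b i))).
transitivity (\sum_a \sum_b \sum_c U a * V b * W c * D a b c).
  apply: eq_bigr => a _; rewrite mulr_sumr; apply: eq_bigr => b _; rewrite mulr_sumr.
  apply: eq_bigr => c _; rewrite key /D; under eq_bigr do rewrite Bsym; ring.
symmetry; under eq_bigr => c _ do rewrite mulr_sumr; rewrite exchange_big.
apply: eq_bigr => a _; under eq_bigr => c _ do rewrite mulr_sumr; rewrite exchange_big.
apply: eq_bigr => b _; apply: eq_bigr => c _; rewrite /D; ring.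
Qed.
End S.

Theorem mainTheorem6 (R : realFieldType) (d k : nat)
    (br : ('I_k.+1 -> 'rV[R]_d) -> 'rV[R]_d -> 'rV[R]_d)
    (S : ('I_k.+1 -> 'rV[R]_d) -> R) :
  gen_metric_nLeibniz br S ->
  (forall U W : tensor R d k, Bform br S U W = Bform br S W U) /\
  (forall U V W : tensor R d k,
     Bform br S U (bracketF br V W) = Bform br S (bracketF br U V) W).
Proof.
move=> hG; split; [exact: Bform_sym | exact: invariance].
Qed.
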